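(* Let $H:\mathbb{R}\times\mathbb{R}^2\to\mathbb{R}^2$, $H(p,x)=(x_1-p,\,-x_2+x_2^2)$, $g:\mathbb{R}^2\to\mathbb{R}^2$, $g(x)=(0.5x_1-0.5x_1^2-x_2,\ 0.5x_1-0.5x_1^2+x_2)$, $D=\mathbb{R}^2_-$, $\Gamma=g^{-1}(D)$, and $S(p)=\{x\in\mathbb{R}^2\mid 0\in H(p,x)+\hat N_\Gamma(x)\}$. Then $S$ has the Aubin property around $(\bar p,\bar x)=(0,(0,0))$, and for every $q\in\mathbb{R}$, $DS(0,(0,0))(q)$ is the set of $u\in\mathbb{R}^2$ for which there exists $\xi\in\mathbb{R}^2$ with $$0=\begin{pmatrix}-q\\0\end{pmatrix}+\begin{pmatrix}u_1\\-u_2\end{pmatrix}+\begin{pmatrix}0.5&0.5\\-1&1\end{pmatrix}\xi,\qquad \xi\in N_{\mathbb{R}^2_-}\!\begin{pmatrix}0.5u_1-u_2\\0.5u_1+u_2\end{pmatrix}.$$ Explicitly, for $q\le0$ this set is $\{(q,0),(\tfrac43q,-\tfrac23q),(\tfrac43q,\tfrac23q)\}$ and for $q\ge0$ it is $\{(0,0)\}$.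
   Context: $\hat N_\Gamma$ is the regular (Fréchet) normal cone $\hat N_\Gamma(x)=(T_\Gamma(x))^\circ$ with $T_\Gamma(x)=\limsup_{t\searrow0}(\Gamma-x)/t$, and $\hat N_\Gamma(x)=\emptyset$ for $x\notin\Gamma$. $N_{\mathbb{R}^2_-}$ is the convex-analysis normal cone (empty outside $\mathbb{R}^2_-$). Aubin property of $S$ around $(\bar p,\bar x)$: there exist neighborhoods $U$ of $\bar p$, $V$ of $\bar x$ and $\kappa>0$ with $S(p_1)\cap V\subset S(p_2)+\kappa|p_1-p_2|\mathbb{B}$ for all $p_1,p_2\in U$. $DS(\bar p,\bar x)(q)=\{u\mid (q,u)\in T_{\operatorname{gph}S}(\bar p,\bar x)\}$ is the graphical derivative. *)

(* Defs.v *)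
From Stdlib Require Import Reals.
Open Scope R_scope.

Definition R2 := (R * R)%type.

Definition add2 (x y : R2) : R2 := (fst x + fst y, snd x + snd y).
Definition sub2 (x y : R2) : R2 := (fst x - fst y, snd x - snd y).
Definition scal2 (a : R) (x : R2) : R2 := (a * fst x, a * snd x).
Definition dot2 (x y : R2) : R := fst x * fst y + snd x * snd y.
Definition norm2 (x : R2) : R := sqrt (dot2 x x).

(* Convergence of a sequence in R^2 (componentwise = in norm). *)
Definition cv2 (u : nat -> R2) (l : R2) : Prop :=
  Un_cv (fun k => fst (u k)) (fst l) /\ Un_cv (fun k => snd (u k)) (snd l).

Definition tangent_cone (Gamma : R2 -> Prop) (x : R2) (w : R2) : Prop :=
  exists (t : nat -> R) (wk : nat -> R2),
    (forall k, 0 < t k) /\ Un_cv t 0 /\ cv2 wk w /\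
    (forall k, Gamma (add2 x (scal2 (t k) (wk k)))).

Definition reg_normal_cone (Gamma : R2 -> Prop) (x : R2) (v : R2) : Prop :=
  Gamma x /\ forall w, tangent_cone Gamma x w -> dot2 v w <= 0.

Definition R2_minus (y : R2) : Prop := fst y <= 0 /\ snd y <= 0.

Definition normal_cone_R2_minus (y : R2) (xi : R2) : Prop :=
  R2_minus y /\ forall z, R2_minus z -> dot2 xi (sub2 z y) <= 0.

Definition H (p : R) (x : R2) : R2 := (fst x - p, - snd x + snd x ^ 2).
Definition g (x : R2) : R2 :=
  ((1/2) * fst x - (1/2) * fst x ^ 2 - snd x,
   (1/2) * fst x - (1/2) * fst x ^ 2 + snd x).
Definition Gamma (x : R2) : Prop := R2_minus (g x).

Definition S (p : R) (x : R2) : Prop :=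
  exists v, reg_normal_cone Gamma x v /\ add2 (H p x) v = (0, 0).

(* Aubin property of a set-valued map around (pb, xb); neighborhoods are
   taken to be open balls (equivalent, since the property is inherited by
   smaller neighborhoods). *)
Definition aubin (F : R -> R2 -> Prop) (pb : R) (xb : R2) : Prop :=
  exists (delta eps kappa : R), 0 < delta /\ 0 < eps /\ 0 < kappa /\
    forall p1 p2 x,
      Rabs (p1 - pb) < delta -> Rabs (p2 - pb) < delta ->
      F p1 x -> norm2 (sub2 x xb) < eps ->
      exists y, F p2 y /\ norm2 (sub2 x y) <= kappa * Rabs (p1 - p2).

(* Graphical derivative: (q,u) in the tangent cone to gph F at (pb,xb). *)
Definition graph_deriv (F : R -> R2 -> Prop) (pb : R) (xb : R2)
    (q : R) (u : R2) : Prop :=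
  exists (t : nat -> R) (qk : nat -> R) (uk : nat -> R2),
    (forall k, 0 < t k) /\ Un_cv t 0 /\ Un_cv qk q /\ cv2 uk u /\
    (forall k, F (pb + t k * qk k) (add2 xb (scal2 (t k) (uk k)))).

(* Main.v *)
Require Import Defs.
From Stdlib Require Import Reals Lra Lia.
Open Scope R_scope.

Lemma cv_const (a : R) : Un_cv (fun _ => a) a.
Proof. intros e He. exists 0%nat. intros n _. unfold Rdist. rewrite Rminus_diag, Rabs_R0. lra. Qed.

Lemma cv_ext (u v : nat -> R) (l : R) : (forall k, u k = v k) -> Un_cv u l -> Un_cv v l.
Proof. intros E H e He. destruct (H e He) as [N HN]. exists N. intros n Hn. rewrite <- E. auto. Qed.

Lemma cv_lim_eq (u : nat -> R) (l l' : R) : l = l' -> Un_cv u l -> Un_cv u l'.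
Proof. intros ->; auto. Qed.

Lemma cv_inv (d A : R) : 0 < d -> 1 <= A -> Un_cv (fun k => d / (INR k + A)) 0.
Proof.
  intros Hd HA e He.
  destruct (INR_unbounded (d / e)) as [N HN].
  exists N. intros n Hn. unfold Rdist. rewrite Rminus_0_r.
  assert (HnN : INR N <= INR n) by (apply le_INR; lia).
  assert (0 <= INR n) by apply pos_INR.
  rewrite Rabs_right.
  2:{ apply Rle_ge, Rlt_le; apply Rdiv_lt_0_compat; lra. }
  apply (Rmult_lt_reg_r (INR n + A)); [lra|].
  unfold Rdiv. rewrite Rmult_assoc, Rinv_l by lra. rewrite Rmult_1_r.
  assert (d / e * e = d) by (field; lra).
  assert (d / e < INR n + A) by lra.
  nra.
Qed.

Lemma cv_le0 (f h : nat -> R) (A : R) :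
  Un_cv f A -> Un_cv h 0 -> (forall k, f k <= h k) -> A <= 0.
Proof. intros Hf Hh Hle. exact (Rle_cv_lim Hle Hf Hh). Qed.

Lemma cv_eventually (u : nat -> R) (l e : R) : Un_cv u l -> 0 < e ->
  exists N, forall n, (N <= n)%nat -> Rabs (u n - l) < e.
Proof. intros H He. destruct (H e He) as [N HN]. exists N. intros n Hn. apply HN. lia. Qed.

Definition aa (s : R) := (1/2) * s - (1/2) * s ^ 2.
Definition cc (s : R) := (1/2) * s ^ 2 - (1/2) * s.

Lemma Gamma_iff x : Gamma x <-> aa (fst x) - snd x <= 0 /\ aa (fst x) + snd x <= 0.
Proof. destruct x. unfold Gamma, R2_minus, g, aa. simpl. tauto. Qed.

Lemma Gamma_sig x s : (s = 1 \/ s = -1) -> Gamma x -> aa (fst x) + s * snd x <= 0.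
Proof. intros Hs HG. apply (proj1 (Gamma_iff _)) in HG. destruct HG as [H1 H2]. destruct Hs as [-> | ->]; lra. Qed.

Lemma step_delta gx d e : gx <= 0 -> 0 <= e -> (gx < 0 \/ d <= 0) ->
  exists dl, 0 < dl /\ forall t, 0 < t <= dl -> gx + t * d - t ^ 2 * e <= 0.
Proof.
  intros Hg He Hc. destruct (Rle_or_lt d 0) as [Hd|Hd].
  - exists 1. split; [lra|]. intros t Ht. nra.
  - destruct Hc as [Hc|Hc]; [|lra].
    exists (- gx / d). split. { apply Rdiv_lt_0_compat; lra. }
    intros t [Ht1 Ht2].
    assert (t * d <= - gx / d * d) by (apply Rmult_le_compat_r; lra).
    assert (- gx / d * d = - gx) by (field; lra). nra.
Qed.

Lemma g_ident x1 x2 w1 w2 t s :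
  aa (x1 + t * w1) + s * (x2 + t * w2) =
  (aa x1 + s * x2) + t * ((1/2 - x1) * w1 + s * w2) - t ^ 2 * ((1/2) * w1 ^ 2).
Proof. unfold aa. field. Qed.

Lemma tangent_build x w : Gamma x ->
  (aa (fst x) - snd x < 0 \/ (1/2 - fst x) * fst w - snd w <= 0) ->
  (aa (fst x) + snd x < 0 \/ (1/2 - fst x) * fst w + snd w <= 0) ->
  tangent_cone Gamma x w.
Proof.
  destruct x as [x1 x2], w as [w1 w2]; simpl. intros HG Hm Hp.
  apply (proj1 (Gamma_iff _)) in HG; simpl in HG. destruct HG as [G1 G2].
  assert (E : 0 <= (1/2) * w1 ^ 2) by nra.
  destruct (step_delta (aa x1 + (-1) * x2) ((1/2 - x1) * w1 + (-1) * w2) _ ltac:(lra) E)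
    as [d1 [Hd1 P1]]. { destruct Hm; [left|right]; lra. }
  destruct (step_delta (aa x1 + 1 * x2) ((1/2 - x1) * w1 + 1 * w2) _ ltac:(lra) E)
    as [d2 [Hd2 P2]]. { destruct Hp; [left|right]; lra. }
  set (d := Rmin d1 d2).
  assert (Hd : 0 < d) by (unfold d; apply Rmin_pos; lra).
  exists (fun k => d / (INR k + 1)), (fun _ => (w1, w2)).
  split; [|split; [|split]].
  - intros k. apply Rdiv_lt_0_compat; [lra|]. pose proof (pos_INR k). lra.
  - apply cv_inv; lra.
  - split; apply cv_const.
  - intros k. set (t := d / (INR k + 1)).
    assert (Ht : 0 < t <= d).
    { pose proof (pos_INR k). unfold t. split. apply Rdiv_lt_0_compat; lra.
      apply (Rmult_le_reg_r (INR k + 1)); [lra|].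
      unfold Rdiv. rewrite Rmult_assoc, Rinv_l by lra. nra. }
    assert (d <= d1) by apply Rmin_l. assert (d <= d2) by apply Rmin_r.
    apply (proj2 (Gamma_iff _)). unfold add2, scal2; simpl. split.
    + pose proof (g_ident x1 x2 w1 w2 t (-1)). pose proof (P1 t ltac:(lra)). lra.
    + pose proof (g_ident x1 x2 w1 w2 t 1). pose proof (P2 t ltac:(lra)). lra.
Qed.

Lemma tangent_active s x w : (s = 1 \/ s = -1) -> Gamma x ->
  aa (fst x) + s * snd x = 0 -> tangent_cone Gamma x w ->
  (1/2 - fst x) * fst w + s * snd w <= 0.
Proof.
  intros Hs HG Ha [t [wk [Ht [Htc [[Hw1 Hw2] Hin]]]]].
  destruct x as [x1 x2], w as [w1 w2]; simpl in *.
  apply (Rle_cv_lim (Un := fun k => (1/2 - x1) * fst (wk k) + s * snd (wk k))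
                    (Vn := fun k => t k * (fst (wk k) * fst (wk k)))).
  - intros k. specialize (Hin k). apply (Gamma_sig _ s Hs) in Hin.
    unfold add2, scal2 in Hin; simpl in Hin.
    rewrite g_ident, Ha in Hin. specialize (Ht k).
    assert (t k * ((1/2 - x1) * fst (wk k) + s * snd (wk k)) <= t k * (t k * (fst (wk k) * fst (wk k)))) by nra.
    apply Rmult_le_reg_l in H; lra.
  - apply CV_plus; apply CV_mult; try apply cv_const; assumption.
  - apply (cv_lim_eq _ (0 * (w1 * w1))); [ring|].
    apply CV_mult; [assumption|]. apply CV_mult; assumption.
Qed.

Lemma S_intro p x : Gamma x ->
  (forall w, tangent_cone Gamma x w -> dot2 (p - fst x, snd x - snd x ^ 2) w <= 0) -> S p x.
Proof.
  intros HG Hw. exists (p - fst x, snd x - snd x ^ 2). split.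
  - split; assumption.
  - destruct x; unfold add2, H; simpl. f_equal; ring.
Qed.

Lemma S_I s : s <= 0 -> S s (s, 0).
Proof.
  intros Hs. apply S_intro.
  - apply (proj2 (Gamma_iff _)). simpl. unfold aa. nra.
  - intros w _. unfold dot2. simpl. nra.
Qed.

Lemma S_O p : 0 <= p -> S p (0, 0).
Proof.
  intros Hp. assert (HG : Gamma (0,0)) by (apply (proj2 (Gamma_iff _)); simpl; unfold aa; lra).
  apply S_intro; [assumption|].
  intros w Hw.
  pose proof (tangent_active 1 (0,0) w ltac:(lra) HG ltac:(simpl; unfold aa; lra) Hw) as H1.
  pose proof (tangent_active (-1) (0,0) w ltac:(lra) HG ltac:(simpl; unfold aa; lra) Hw) as H2.
  simpl in *. unfold dot2; simpl. assert (fst w <= 0) by lra. nra.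
Qed.

Lemma S_sig sg s : (sg = 1 \/ sg = -1) -> -1 <= s <= 0 ->
  S (s + (1/2 - s) * (cc s - sg * cc s ^ 2)) (s, sg * cc s).
Proof.
  intros Hsg Hs.
  assert (Hc : 0 <= cc s <= 1) by (unfold cc; nra).
  assert (Ha : aa s = - cc s) by (unfold aa, cc; ring).
  assert (HG : Gamma (s, sg * cc s)).
  { apply (proj2 (Gamma_iff _)). simpl. rewrite Ha. destruct Hsg; subst; lra. }
  apply S_intro; [assumption|].
  intros w Hw.
  pose proof (tangent_active sg _ w Hsg HG ltac:(simpl; rewrite Ha; destruct Hsg; subst; lra) Hw) as H1.
  destruct w as [w1 w2]. unfold dot2. cbn [fst snd] in *.
  assert (Hl : 0 <= cc s - sg * cc s ^ 2) by (destruct Hsg; subst; nra).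
  assert (E : (s + (1 / 2 - s) * (cc s - sg * cc s ^ 2) - s) * w1 +
     (sg * cc s - (sg * cc s) ^ 2) * w2 =
     (cc s - sg * cc s ^ 2) * ((1/2 - s) * w1 + sg * w2)).
  { destruct Hsg; subst; ring. }
  rewrite E. nra.
Qed.

Lemma classify p x : S p x -> fst x < 1 -> Rabs (snd x) < 1 ->
  fst x <= 0 /\
  ((snd x = 0 /\ p = fst x) \/
   (exists sg, (sg = 1 \/ sg = -1) /\ snd x = sg * cc (fst x) /\
      p = fst x + (1/2 - fst x) * (cc (fst x) - sg * cc (fst x) ^ 2)) \/
   (fst x = 0 /\ snd x = 0 /\ 0 <= p)).
Proof.
  destruct x as [x1 x2]. simpl. intros [[v1 v2] [[HG Hn] Heq]] Hx1 Hx2.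
  unfold add2, H in Heq; simpl in Heq. injection Heq as E1 E2.
  pose proof HG as HG'. apply (proj1 (Gamma_iff _)) in HG'. simpl in HG'.
  destruct HG' as [G1 G2].
  assert (Ha : aa x1 = - cc x1) by (unfold aa, cc; ring).
  assert (Hx1le : x1 <= 0) by (unfold aa in G1, G2; nra).
  split; [assumption|].
  apply Rabs_def2 in Hx2.
  destruct (Rle_lt_or_eq_dec _ _ G1) as [L1|Q1];
  destruct (Rle_lt_or_eq_dec _ _ G2) as [L2|Q2].
  -
    pose proof (Hn (v1, v2) ltac:(apply (tangent_build (x1,x2) (v1, v2) HG); simpl; first [left; assumption | right; lra])) as Hd.
    unfold dot2 in Hd; simpl in Hd.
    assert (v1 = 0) by nra. assert (v2 = 0) by nra.
    left. split; [|lra]. nra.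
  -
    right; left. exists 1. split; [lra|].
    pose proof (Hn (1, -(1/2 - x1)) ltac:(apply (tangent_build (x1,x2) (1, -(1/2 - x1)) HG); simpl; first [left; assumption | right; lra])) as Hd1.
    pose proof (Hn (-1, (1/2 - x1)) ltac:(apply (tangent_build (x1,x2) (-1, (1/2 - x1)) HG); simpl; first [left; assumption | right; lra])) as Hd2.
    unfold dot2 in Hd1, Hd2; simpl in Hd1, Hd2.
    assert (Ev : v1 = (1/2 - x1) * v2) by lra.
    assert (Ex2 : x2 = cc x1) by lra.
    split; [lra|].
    assert (Ep : p = x1 + v1) by lra. rewrite Ep, Ev.
    assert (Ev2 : v2 = x2 - x2 ^ 2) by lra. rewrite Ev2, Ex2. ring.
  -
    right; left. exists (-1). split; [lra|].
    pose proof (Hn (1, (1/2 - x1)) ltac:(apply (tangent_build (x1,x2) (1, (1/2 - x1)) HG); simpl; first [left; assumption | right; lra])) as Hd1.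
    pose proof (Hn (-1, -(1/2 - x1)) ltac:(apply (tangent_build (x1,x2) (-1, -(1/2 - x1)) HG); simpl; first [left; assumption | right; lra])) as Hd2.
    unfold dot2 in Hd1, Hd2; simpl in Hd1, Hd2.
    assert (Ev : v1 = - (1/2 - x1) * v2) by lra.
    assert (Ex2 : x2 = - cc x1) by lra.
    split; [lra|].
    assert (Ep : p = x1 + v1) by lra. rewrite Ep, Ev.
    assert (Ev2 : v2 = x2 - x2 ^ 2) by lra. rewrite Ev2, Ex2. ring.
  -
    right; right.
    assert (Hx20 : x2 = 0) by lra.
    assert (Hx10 : x1 = 0) by (unfold aa in Q1; nra).
    subst x1 x2.
    pose proof (Hn (-1, 0) ltac:(apply (tangent_build (0,0) (-1, 0) HG); simpl; first [left; assumption | right; lra])) as Hd.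
    unfold dot2 in Hd; simpl in Hd. split; [lra|split; lra].
Qed.

Definition Tset (q : R) (u : R2) : Prop :=
  (q <= 0 /\ (u = (q, 0) \/ u = ((4/3) * q, - (2/3) * q) \/ u = ((4/3) * q, (2/3) * q)))
  \/ (0 <= q /\ u = (0, 0)).

Lemma pair_eq (a b c d : R) : a = c -> b = d -> (a, b) = (c, d).
Proof. intros -> ->; reflexivity. Qed.

Lemma xi_iff q u :
  (exists xi : R2,
       (0, 0) = ( - q + fst u + ((1/2) * fst xi + (1/2) * snd xi),
                  0 - snd u + ((-1) * fst xi + 1 * snd xi) ) /\
       normal_cone_R2_minus ((1/2) * fst u - snd u, (1/2) * fst u + snd u) xi)
  <-> Tset q u.
Proof.
  destruct u as [u1 u2]. unfold Tset, normal_cone_R2_minus, R2_minus, dot2, sub2. simpl.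
  split.
  - intros [[x1 x2] [Heq [[Y1 Y2] Hz]]]. simpl in *.
    injection Heq as E1 E2.
    pose proof (Hz ((1/2)*u1 - u2 - 1, (1/2)*u1 + u2) ltac:(simpl; lra)) as Z1.
    pose proof (Hz ((1/2)*u1 - u2, (1/2)*u1 + u2 - 1) ltac:(simpl; lra)) as Z2.
    pose proof (Hz (0, (1/2)*u1 + u2) ltac:(simpl; lra)) as Z3.
    pose proof (Hz (2 * ((1/2)*u1 - u2), (1/2)*u1 + u2) ltac:(simpl; lra)) as Z4.
    pose proof (Hz ((1/2)*u1 - u2, 0) ltac:(simpl; lra)) as Z5.
    pose proof (Hz ((1/2)*u1 - u2, 2 * ((1/2)*u1 + u2)) ltac:(simpl; lra)) as Z6.
    simpl in Z1, Z2, Z3, Z4, Z5, Z6.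
    assert (P1 : x1 * ((1/2)*u1 - u2) = 0) by nra.
    assert (P2 : x2 * ((1/2)*u1 + u2) = 0) by nra.
    apply Rmult_integral in P1. apply Rmult_integral in P2.
    destruct P1 as [P1|P1]; destruct P2 as [P2|P2].
    + left. split; [lra|]. left. apply pair_eq; lra.
    + left. split; [lra|]. right; left. apply pair_eq; lra.
    + left. split; [lra|]. right; right. apply pair_eq; lra.
    + right. split; [lra|]. apply pair_eq; lra.
  - intros [[Hq [E|[E|E]]]|[Hq E]]; injection E as -> ->.
    + exists (0, 0). simpl. split. { apply pair_eq; lra. }
      split; [split; lra|]. intros z _. lra.
    + exists (0, - (2/3) * q). simpl. split. { apply pair_eq; lra. }
      split; [split; lra|]. intros [z1 z2] [_ Hz2]. simpl in *. nra.
    + exists (- (2/3) * q, 0). simpl. split. { apply pair_eq; lra. }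
      split; [split; lra|]. intros [z1 z2] [Hz1 _]. simpl in *. nra.
    + exists (q, q). simpl. split. { apply pair_eq; lra. }
      split; [split; lra|]. intros [z1 z2] [Hz1 Hz2]. simpl in *. nra.
Qed.

Lemma T_neg q u : q <= 0 -> (Tset q u <->
      u = (q, 0) \/ u = ((4/3) * q, - (2/3) * q) \/ u = ((4/3) * q, (2/3) * q)).
Proof.
  intros Hq. unfold Tset. split.
  - intros [[_ H]|[Hq' ->]]; [exact H|]. left. apply pair_eq; lra.
  - intros H. left. split; assumption.
Qed.

Lemma T_pos q u : 0 <= q -> (Tset q u <-> u = (0, 0)).
Proof.
  intros Hq. unfold Tset. split.
  - intros [[Hq' [E | [E | E]]] | [_ H]]; try exact H; rewrite E; apply pair_eq; lra.
  - intros ->. right. split; [assumption|reflexivity].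
Qed.

Lemma S_eq p p' x x' : p = p' -> x = x' -> S p' x' -> S p x.
Proof. intros -> ->; auto. Qed.

Lemma tk_props (A : R) k : 1 <= A -> 0 < 1 / (INR k + A) /\ 1 / (INR k + A) * (A - 1) <= 1.
Proof.
  intros HA. pose proof (pos_INR k). split.
  - apply Rdiv_lt_0_compat; lra.
  - assert (1 / (INR k + A) * (A - 1) = (A - 1) / (INR k + A)) by (field; lra).
    rewrite H0. apply (Rmult_le_reg_r (INR k + A)); [lra|].
    unfold Rdiv. rewrite Rmult_assoc, Rinv_l by lra. lra.
Qed.

Lemma gd_I q : q <= 0 -> graph_deriv S 0 (0, 0) q (q, 0).
Proof.
  intros Hq. exists (fun k => 1 / (INR k + 1)), (fun _ => q), (fun _ => (q, 0)).
  split; [|split; [|split; [|split]]].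
  - intros k. apply (tk_props 1 k); lra.
  - apply cv_inv; lra.
  - apply cv_const.
  - split; apply cv_const.
  - intros k. pose proof (proj1 (tk_props 1 k ltac:(lra))) as Ht.
    apply (S_eq _ (1 / (INR k + 1) * q) _ (1 / (INR k + 1) * q, 0)).
    + ring. + unfold add2, scal2; simpl. apply pair_eq; ring.
    + apply S_I. nra.
Qed.

Lemma gd_O q : 0 <= q -> graph_deriv S 0 (0, 0) q (0, 0).
Proof.
  intros Hq. exists (fun k => 1 / (INR k + 1)), (fun _ => q), (fun _ => (0, 0)).
  split; [|split; [|split; [|split]]].
  - intros k. apply (tk_props 1 k); lra.
  - apply cv_inv; lra.
  - apply cv_const.
  - split; apply cv_const.
  - intros k. pose proof (proj1 (tk_props 1 k ltac:(lra))) as Ht.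
    apply (S_eq _ (1 / (INR k + 1) * q) _ (0, 0)).
    + ring. + unfold add2, scal2; simpl. apply pair_eq; ring.
    + apply S_O. nra.
Qed.

Lemma gd_sig sg q : (sg = 1 \/ sg = -1) -> q <= 0 ->
  graph_deriv S 0 (0, 0) q ((4/3) * q, - sg * (2/3) * q).
Proof.
  intros Hsg Hq. set (u1 := (4/3) * q). set (A := 1 + Rabs u1).
  assert (HA : 1 <= A) by (unfold A; pose proof (Rabs_pos u1); lra).
  set (gm := fun t => (1/2) * t * u1 ^ 2 - (1/2) * u1).
  set (fq := fun t => u1 + (1/2 - t * u1) * (gm t - sg * t * gm t ^ 2)).
  set (fu := fun t => sg * gm t).
  exists (fun k => 1 / (INR k + A)), (fun k => fq (1 / (INR k + A))),
         (fun k => (u1, fu (1 / (INR k + A)))).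
  split; [|split; [|split; [|split]]].
  - intros k. apply (tk_props A k); lra.
  - apply cv_inv; lra.
  - apply (cv_lim_eq _ (fq 0)).
    { unfold fq, gm, u1. field. }
    apply continuity_seq; [unfold fq, gm; reg | apply cv_inv; lra].
  - split; simpl.
    + apply cv_const.
    + apply (cv_lim_eq _ (fu 0)).
      { unfold fu, gm, u1. field. }
      apply continuity_seq; [unfold fu, gm; reg | apply cv_inv; lra].
  - intros k. destruct (tk_props A k HA) as [Ht1 Ht2]. set (t := 1 / (INR k + A)) in *.
    assert (Hu1 : u1 <= 0) by (unfold u1; lra).
    assert (Hs : -1 <= t * u1 <= 0).
    { unfold A in Ht2. rewrite Rabs_left1 in Ht2 by lra. nra. }
    apply (S_eq _ (t * u1 + (1/2 - t * u1) * (cc (t * u1) - sg * cc (t * u1) ^ 2)) _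
                  (t * u1, sg * cc (t * u1))).
    + unfold fq, gm, cc. field.
    + unfold add2, scal2, fu, gm, cc; simpl. apply pair_eq; field.
    + apply S_sig; assumption.
Qed.

Lemma gd_back q u : Tset q u -> graph_deriv S 0 (0, 0) q u.
Proof.
  intros [[Hq [E|[E|E]]]|[Hq E]]; rewrite E.
  - apply gd_I; assumption.
  - pose proof (gd_sig 1 q (or_introl eq_refl) Hq) as G.
    replace ((4/3) * q, - (2/3) * q) with ((4/3) * q, - 1 * (2/3) * q); [exact G|].
    apply pair_eq; ring.
  - pose proof (gd_sig (-1) q (or_intror eq_refl) Hq) as G.
    replace ((4/3) * q, (2/3) * q) with ((4/3) * q, - -1 * (2/3) * q); [exact G|].
    apply pair_eq; ring.
  - apply gd_O; assumption.
Qed.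

Definition rI (Q U1 U2 : R) := Rabs U2 + Rabs (Q - U1) + (Rabs U1 + U1).
Definition rS (sg Q U1 U2 : R) :=
  Rabs (U2 + (1/2) * sg * U1) + Rabs (Q - U1 - (1/2) * sg * U2) + (Rabs U1 + U1).
Definition rO (Q U1 U2 : R) := Rabs U1 + Rabs U2 + (Rabs Q - Q).

Lemma abs_nonneg_part a : 0 <= Rabs a + a.
Proof. unfold Rabs; destruct Rcase_abs; lra. Qed.
Lemma abs_minus_part a : 0 <= Rabs a - a.
Proof. unfold Rabs; destruct Rcase_abs; lra. Qed.
Lemma abs0 a : Rabs a = 0 -> a = 0.
Proof. unfold Rabs; destruct Rcase_abs; lra. Qed.
Lemma absp0 a : Rabs a + a = 0 -> a <= 0.
Proof. unfold Rabs; destruct Rcase_abs; lra. Qed.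
Lemma absm0 a : Rabs a - a = 0 -> 0 <= a.
Proof. unfold Rabs; destruct Rcase_abs; lra. Qed.

Lemma sum3_0 a b c : 0 <= a -> 0 <= b -> 0 <= c -> a + b + c = 0 -> a = 0 /\ b = 0 /\ c = 0.
Proof. lra. Qed.

Lemma r_nonneg q u1 u2 : 0 <= rI q u1 u2 /\ 0 <= rS 1 q u1 u2 /\ 0 <= rS (-1) q u1 u2 /\ 0 <= rO q u1 u2.
Proof.
  unfold rI, rS, rO.
  pose proof (Rabs_pos u2). pose proof (Rabs_pos u1). pose proof (Rabs_pos (q - u1)).
  pose proof (abs_nonneg_part u1). pose proof (abs_minus_part q).
  pose proof (Rabs_pos (u2 + 1/2 * 1 * u1)). pose proof (Rabs_pos (q - u1 - 1/2 * 1 * u2)).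
  pose proof (Rabs_pos (u2 + 1/2 * -1 * u1)). pose proof (Rabs_pos (q - u1 - 1/2 * -1 * u2)).
  repeat split; lra.
Qed.

Lemma resid_zero q u1 u2 :
  rI q u1 u2 = 0 \/ rS 1 q u1 u2 = 0 \/ rS (-1) q u1 u2 = 0 \/ rO q u1 u2 = 0 ->
  Tset q (u1, u2).
Proof.
  unfold Tset, rI, rS, rO. intros [H|[H|[H|H]]].
  - apply sum3_0 in H; try apply Rabs_pos; try apply abs_nonneg_part.
    destruct H as [H1 [H2 H3]]. apply abs0 in H1. apply abs0 in H2. apply absp0 in H3.
    left. split; [lra|]. left. apply pair_eq; lra.
  - apply sum3_0 in H; try apply Rabs_pos; try apply abs_nonneg_part.
    destruct H as [H1 [H2 H3]]. apply abs0 in H1. apply abs0 in H2. apply absp0 in H3.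
    left. split; [lra|]. right; left. apply pair_eq; lra.
  - apply sum3_0 in H; try apply Rabs_pos; try apply abs_nonneg_part.
    destruct H as [H1 [H2 H3]]. apply abs0 in H1. apply abs0 in H2. apply absp0 in H3.
    left. split; [lra|]. right; right. apply pair_eq; lra.
  - apply sum3_0 in H; try apply Rabs_pos; try apply abs_minus_part.
    destruct H as [H1 [H2 H3]]. apply abs0 in H1. apply abs0 in H2. apply absm0 in H3.
    right. split; [lra|]. apply pair_eq; lra.
Qed.

Lemma abs_close a A e : a - A <= e -> A - a <= e -> Rabs a <= Rabs A + e.
Proof. unfold Rabs; destruct (Rcase_abs a), (Rcase_abs A); lra. Qed.

Lemma r_lip q u1 u2 Q U1 U2 d :
  Rabs (Q - q) < d -> Rabs (U1 - u1) < d -> Rabs (U2 - u2) < d ->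
  rI q u1 u2 <= rI Q U1 U2 + 8 * d /\
  rS 1 q u1 u2 <= rS 1 Q U1 U2 + 8 * d /\
  rS (-1) q u1 u2 <= rS (-1) Q U1 U2 + 8 * d /\
  rO q u1 u2 <= rO Q U1 U2 + 8 * d.
Proof.
  intros Hq H1 H2. apply Rabs_def2 in Hq, H1, H2.
  unfold rI, rS, rO.
  pose proof (abs_close u1 U1 d ltac:(lra) ltac:(lra)).
  pose proof (abs_close u2 U2 d ltac:(lra) ltac:(lra)).
  pose proof (abs_close q Q d ltac:(lra) ltac:(lra)).
  pose proof (abs_close (q - u1) (Q - U1) (2*d) ltac:(lra) ltac:(lra)).
  pose proof (abs_close (u2 + 1/2 * 1 * u1) (U2 + 1/2 * 1 * U1) (2*d) ltac:(lra) ltac:(lra)).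
  pose proof (abs_close (q - u1 - 1/2 * 1 * u2) (Q - U1 - 1/2 * 1 * U2) (3*d) ltac:(lra) ltac:(lra)).
  pose proof (abs_close (u2 + 1/2 * -1 * u1) (U2 + 1/2 * -1 * U1) (2*d) ltac:(lra) ltac:(lra)).
  pose proof (abs_close (q - u1 - 1/2 * -1 * u2) (Q - U1 - 1/2 * -1 * U2) (3*d) ltac:(lra) ltac:(lra)).
  repeat split; lra.
Qed.

Lemma abs_le_mult a b A B' : Rabs a <= A -> Rabs b <= B' -> Rabs (a * b) <= A * B'.
Proof.
  intros Ha Hb. rewrite Rabs_mult. apply Rmult_le_compat; try apply Rabs_pos; assumption.
Qed.

Lemma abs_le3 a b c : Rabs (a + b + c) <= Rabs a + Rabs b + Rabs c.
Proof. unfold Rabs; repeat destruct Rcase_abs; lra. Qed.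

Lemma P_bound t U1 U2 B : 0 <= t <= 1 -> Rabs U1 <= B -> Rabs U2 <= B ->
  Rabs (-(1/2) * U2 ^ 2 - U1 * U2 + t * U1 * U2 ^ 2) <= 3/2 * B ^ 2 + B ^ 3.
Proof.
  intros Ht H1 H2.
  assert (HB : 0 <= B) by (pose proof (Rabs_pos U1); lra).
  replace (-(1/2) * U2 ^ 2 - U1 * U2 + t * U1 * U2 ^ 2) with
    ((-(1/2)) * (U2 * U2) + (- U1) * U2 + (t * U1) * (U2 * U2)) by ring.
  eapply Rle_trans; [apply abs_le3|].
  assert (A1 : Rabs (U2 * U2) <= B * B) by (apply abs_le_mult; assumption).
  assert (A2 : Rabs (-(1/2) * (U2 * U2)) <= 1/2 * (B * B)).
  { apply abs_le_mult; [rewrite Rabs_left by lra; lra | assumption]. }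
  assert (A3 : Rabs (- U1 * U2) <= B * B).
  { apply abs_le_mult; [rewrite Rabs_Ropp; assumption | assumption]. }
  assert (A4 : Rabs (t * U1) <= 1 * B).
  { apply abs_le_mult; [rewrite Rabs_right by lra; lra | assumption]. }
  assert (A5 : Rabs (t * U1 * (U2 * U2)) <= (1 * B) * (B * B)) by (apply abs_le_mult; assumption).
  simpl. lra.
Qed.

Lemma abs_le_inv x a : Rabs x <= a -> -a <= x <= a.
Proof. unfold Rabs; destruct Rcase_abs; lra. Qed.

Lemma absp_zero a : a <= 0 -> Rabs a + a = 0.
Proof. intros; rewrite Rabs_left1 by lra; lra. Qed.

Lemma branch_bound t Q U B : 0 < t <= 1 -> Rabs (fst U) <= B -> Rabs (snd U) <= B -> t * B < 1 ->
  S (0 + t * Q) (add2 (0, 0) (scal2 t U)) ->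
  rI Q (fst U) (snd U) = 0 \/ rS 1 Q (fst U) (snd U) <= t * (2 * B ^ 2 + B ^ 3) \/
  rS (-1) Q (fst U) (snd U) <= t * (2 * B ^ 2 + B ^ 3) \/ rO Q (fst U) (snd U) = 0.
Proof.
  destruct U as [U1 U2]. simpl. intros Ht H1 H2 HtB HS.
  assert (HB : 0 <= B) by (pose proof (Rabs_pos U1); lra).
  pose proof (abs_le_inv _ _ H1). pose proof (abs_le_inv _ _ H2).
  destruct (classify _ _ HS) as [Hx1 Hcase].
  { unfold add2, scal2; simpl. nra. }
  { unfold add2, scal2; simpl. apply Rabs_def1; nra. }
  unfold add2, scal2 in Hx1, Hcase; simpl in Hx1, Hcase.
  assert (U1n : U1 <= 0) by nra.
  destruct Hcase as [[E2 Ep]|[[sg [Hsg [E2 Ep]]]|[E1 [E2 Ep]]]].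
  - left. assert (U2 = 0) by nra. assert (Q = U1) by nra.
    unfold rI. subst. rewrite Rminus_diag, Rabs_R0, absp_zero by lra. lra.
  - right. set (P := -(1/2) * U2 ^ 2 - U1 * U2 + t * U1 * U2 ^ 2).
    assert (PB : Rabs P <= 3/2 * B ^ 2 + B ^ 3) by (apply P_bound; [lra | assumption | assumption]).
    assert (Hu1 : Rabs (t * U1 ^ 2) <= t * B ^ 2).
    { rewrite Rabs_mult, (Rabs_right t) by lra. apply Rmult_le_compat_l; [lra|].
      rewrite (Rabs_right (U1 ^ 2)) by nra. nra. }
    destruct Hsg as [->| ->]; [left|right].
    + assert (C : cc (0 + t * U1) = t * U2) by lra. rewrite C in Ep.
      assert (Ea : t * (U2 + 1/2 * 1 * U1 - 1/2 * (t * U1 ^ 2)) = 0) by (unfold cc in C; nra).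
      assert (Eb : t * (Q - U1 - 1/2 * 1 * U2 - t * P) = 0) by (unfold P; nra).
      apply Rmult_integral in Ea. apply Rmult_integral in Eb.
      destruct Ea as [Ea|Ea]; [lra|]. destruct Eb as [Eb|Eb]; [lra|].
      unfold rS. rewrite absp_zero by lra.
      replace (U2 + 1/2 * 1 * U1) with (1/2 * (t * U1 ^ 2)) by lra.
      replace (Q - U1 - 1/2 * 1 * U2) with (t * P) by lra.
      rewrite !Rabs_mult, (Rabs_right (1/2)), (Rabs_right t) by lra.
      assert (t * Rabs P <= t * (3/2 * B ^ 2 + B ^ 3)) by (apply Rmult_le_compat_l; lra).
      rewrite Rabs_mult, (Rabs_right t) in Hu1 by lra. lra.
    + assert (C : cc (0 + t * U1) = - t * U2) by lra. rewrite C in Ep.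
      assert (Ea : t * (U2 + 1/2 * -1 * U1 + 1/2 * (t * U1 ^ 2)) = 0) by (unfold cc in C; nra).
      assert (Eb : t * (Q - U1 - 1/2 * -1 * U2 + t * P) = 0) by (unfold P; nra).
      apply Rmult_integral in Ea. apply Rmult_integral in Eb.
      destruct Ea as [Ea|Ea]; [lra|]. destruct Eb as [Eb|Eb]; [lra|].
      unfold rS. rewrite absp_zero by lra.
      replace (U2 + 1/2 * -1 * U1) with (- (1/2 * (t * U1 ^ 2))) by lra.
      replace (Q - U1 - 1/2 * -1 * U2) with (- (t * P)) by lra.
      rewrite !Rabs_Ropp, !Rabs_mult, (Rabs_right (1/2)), (Rabs_right t) by lra.
      assert (t * Rabs P <= t * (3/2 * B ^ 2 + B ^ 3)) by (apply Rmult_le_compat_l; lra).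
      rewrite Rabs_mult, (Rabs_right t) in Hu1 by lra. lra.
  - right; right; right. assert (U1 = 0) by nra. assert (U2 = 0) by nra.
    assert (0 <= Q) by nra. subst. unfold rO. rewrite Rabs_R0, (Rabs_right Q) by lra. lra.
Qed.

Lemma gd_forward q u : graph_deriv S 0 (0, 0) q u -> Tset q u.
Proof.
  destruct u as [u1 u2]. intros [t [qk [uk [Ht [Htc [Hqc [[Hu1 Hu2] Hin]]]]]]].
  simpl in Hu1, Hu2.
  destruct (r_nonneg q u1 u2) as [N1 [N2 [N3 N4]]].
  destruct (Rle_lt_or_eq_dec _ _ N1) as [P1|P1]; [|apply resid_zero; auto].
  destruct (Rle_lt_or_eq_dec _ _ N2) as [P2|P2]; [|apply resid_zero; auto].
  destruct (Rle_lt_or_eq_dec _ _ N3) as [P3|P3]; [|apply resid_zero; auto].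
  destruct (Rle_lt_or_eq_dec _ _ N4) as [P4|P4]; [|apply resid_zero; auto].
  exfalso.
  set (eta := Rmin (Rmin (rI q u1 u2) (rS 1 q u1 u2)) (Rmin (rS (-1) q u1 u2) (rO q u1 u2))).
  assert (He : 0 < eta) by (unfold eta; repeat apply Rmin_pos; lra).
  assert (Le1 : eta <= rI q u1 u2) by (unfold eta; eapply Rle_trans; apply Rmin_l).
  assert (Le2 : eta <= rS 1 q u1 u2) by (unfold eta; eapply Rle_trans; [apply Rmin_l | apply Rmin_r]).
  assert (Le3 : eta <= rS (-1) q u1 u2) by (unfold eta; eapply Rle_trans; [apply Rmin_r | apply Rmin_l]).
  assert (Le4 : eta <= rO q u1 u2) by (unfold eta; eapply Rle_trans; apply Rmin_r).
  set (B := Rabs u1 + Rabs u2 + 1).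
  assert (HB : 1 <= B) by (unfold B; pose proof (Rabs_pos u1); pose proof (Rabs_pos u2); lra).
  set (K := 2 * B ^ 2 + B ^ 3).
  assert (HK : 0 <= K) by (unfold K; nra).
  set (d := Rmin (eta / 16) 1).
  assert (Hd : 0 < d) by (unfold d; apply Rmin_pos; lra).
  assert (Hd1 : d <= eta / 16) by apply Rmin_l. assert (Hd2 : d <= 1) by apply Rmin_r.
  set (tau := Rmin 1 (Rmin (1 / (B + 1)) (eta / (2 * (K + 1))))).
  assert (Htau : 0 < tau).
  { unfold tau. apply Rmin_pos; [lra|]. apply Rmin_pos; apply Rdiv_lt_0_compat; lra. }
  assert (T1 : tau <= 1) by apply Rmin_l.
  assert (T2 : tau <= 1 / (B + 1)) by (unfold tau; eapply Rle_trans; [apply Rmin_r | apply Rmin_l]).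
  assert (T3 : tau <= eta / (2 * (K + 1))) by (unfold tau; eapply Rle_trans; apply Rmin_r).
  destruct (cv_eventually _ _ _ Htc Htau) as [M1 HM1].
  destruct (cv_eventually _ _ _ Hqc Hd) as [M2 HM2].
  destruct (cv_eventually _ _ _ Hu1 Hd) as [M3 HM3].
  destruct (cv_eventually _ _ _ Hu2 Hd) as [M4 HM4].
  set (n := (M1 + M2 + M3 + M4)%nat).
  specialize (HM1 n ltac:(unfold n; lia)). specialize (HM2 n ltac:(unfold n; lia)).
  specialize (HM3 n ltac:(unfold n; lia)). specialize (HM4 n ltac:(unfold n; lia)).
  specialize (Ht n). specialize (Hin n).
  rewrite Rminus_0_r, Rabs_right in HM1 by lra.
  assert (Bt1 : t n * (B + 1) < 1).
  { assert (t n * (B + 1) < 1 / (B + 1) * (B + 1)) by (apply Rmult_lt_compat_r; lra).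
    replace (1 / (B + 1) * (B + 1)) with 1 in H by (field; lra). lra. }
  assert (Bt2 : t n * K < eta / 2).
  { assert (t n * (K + 1) < eta / (2 * (K + 1)) * (K + 1)) by (apply Rmult_lt_compat_r; lra).
    replace (eta / (2 * (K + 1)) * (K + 1)) with (eta / 2) in H by (field; lra). nra. }
  assert (UB1 : Rabs (fst (uk n)) <= B).
  { pose proof (Rabs_def2 _ _ HM3). unfold B. pose proof (Rabs_pos u2).
    pose proof (abs_close (fst (uk n)) u1 d ltac:(lra) ltac:(lra)). lra. }
  assert (UB2 : Rabs (snd (uk n)) <= B).
  { pose proof (Rabs_def2 _ _ HM4). unfold B. pose proof (Rabs_pos u1).
    pose proof (abs_close (snd (uk n)) u2 d ltac:(lra) ltac:(lra)). lra. }
  destruct (r_lip q u1 u2 (qk n) (fst (uk n)) (snd (uk n)) d HM2 HM3 HM4) as [L1 [L2 [L3 L4]]].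
  destruct (branch_bound (t n) (qk n) (uk n) B ltac:(lra) UB1 UB2 ltac:(nra) Hin)
    as [R|[R|[R|R]]]; unfold K in Bt2; lra.
Qed.

Lemma gd_iff q u : graph_deriv S 0 (0, 0) q u <-> Tset q u.
Proof. split; [apply gd_forward | apply gd_back]. Qed.

Definition Pb (sg s : R) := s + (1/2 - s) * (cc s - sg * cc s ^ 2).

Lemma abs_le_norm x : Rabs (fst x) <= norm2 x /\ Rabs (snd x) <= norm2 x.
Proof.
  destruct x as [a b]. unfold norm2, dot2; simpl.
  rewrite <- (sqrt_Rsqr_abs a), <- (sqrt_Rsqr_abs b). unfold Rsqr.
  split; apply sqrt_le_1_alt; nra.
Qed.

Lemma norm_le_sum x : norm2 x <= Rabs (fst x) + Rabs (snd x).
Proof.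
  destruct x as [a b]. unfold norm2, dot2; simpl.
  rewrite <- (sqrt_square (Rabs a + Rabs b)) by (pose proof (Rabs_pos a); pose proof (Rabs_pos b); lra).
  apply sqrt_le_1_alt. unfold Rabs; repeat destruct Rcase_abs; nra.
Qed.

Lemma cc_bounds s : -1/10 <= s <= 0 -> 0 <= cc s <= (11/20) * (- s).
Proof. intros Hs. unfold cc. split; nra. Qed.

Lemma Pb_bounds sg s : (sg = 1 \/ sg = -1) -> -1/10 <= s <= 0 -> s <= Pb sg s <= (3/5) * s.
Proof.
  intros Hsg Hs. destruct (cc_bounds s Hs) as [C1 C2]. unfold Pb.
  assert (C3 : cc s <= 11/200) by lra.
  assert (K : 0 <= cc s - sg * cc s ^ 2 <= (211/200) * cc s) by (destruct Hsg as [-> | ->]; split; nra).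
  assert (K2 : 0 <= (1/2 - s) * (cc s - sg * cc s ^ 2) <= (3/5) * ((211/200) * cc s)) by (split; nra).
  lra.
Qed.

Lemma Pb_lip sg s s2 : (sg = 1 \/ sg = -1) -> -1/10 <= s <= 0 -> -1/10 <= s2 <= 0 ->
  Rabs (s - s2) + Rabs (sg * cc s - sg * cc s2) <= 4 * Rabs (Pb sg s - Pb sg s2).
Proof.
  intros Hsg Hs Hs2.
  destruct (cc_bounds s Hs) as [C1 C2]. destruct (cc_bounds s2 Hs2) as [D1 D2].
  set (Qf := 1 + (1/2 - s) * (1 - sg * (cc s + cc s2)) * ((s + s2 - 1) / 2) - (cc s2 - sg * cc s2 ^ 2)).
  assert (EP : Pb sg s - Pb sg s2 = (s - s2) * Qf).
  { unfold Pb, Qf, cc. destruct Hsg as [-> | ->]; field. }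
  assert (EC : sg * cc s - sg * cc s2 = (s - s2) * (sg * ((s + s2 - 1) / 2))).
  { unfold cc. field. }
  assert (HQ : 1/2 <= Qf).
  { unfold Qf.
    assert (Bf : 89/100 <= 1 - sg * (cc s + cc s2) <= 111/100) by (destruct Hsg as [-> | ->]; lra).
    set (Bv := 1 - sg * (cc s + cc s2)) in *.
    assert (AB : 0 <= (1/2 - s) * Bv <= 2/3).
    { split; [nra|]. assert ((3/5 - (1/2 - s)) * Bv >= 0) by nra.
      assert ((1/2 - s) * (111/100 - Bv) >= 0) by nra. nra. }
    set (AB' := (1/2 - s) * Bv) in *.
    assert (ABC : -(2/5) <= AB' * ((s + s2 - 1) / 2)).
    { assert ((2/3 - AB') * (- ((s + s2 - 1) / 2)) >= 0) by nra.
      assert (AB' * ((s + s2 - 1) / 2 + 3/5) >= 0) by nra. nra. }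
    assert (K2 : cc s2 - sg * cc s2 ^ 2 <= 1/10) by (destruct Hsg as [-> | ->]; nra).
    lra. }
  assert (HS : Rabs (sg * ((s + s2 - 1) / 2)) <= 3/5).
  { destruct Hsg as [-> | ->]; unfold Rabs; destruct Rcase_abs; lra. }
  rewrite EP, EC, (Rabs_mult (s - s2) (sg * _)), (Rabs_mult (s - s2) Qf), (Rabs_right Qf) by lra.
  pose proof (Rabs_pos (s - s2)). nra.
Qed.

Lemma Pb_cont sg : continuity (Pb sg).
Proof. unfold Pb, cc. reg. Qed.

Lemma Pb_solve sg p2 : (sg = 1 \/ sg = -1) -> -1/20 < p2 < 0 ->
  exists s2, -1/10 <= s2 <= 0 /\ Pb sg s2 = p2.
Proof.
  intros Hsg Hp.
  assert (Hf : continuity (fun s => Pb sg s - p2)).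
  { apply continuity_minus; [apply Pb_cont | apply continuity_const; intros a b; reflexivity]. }
  destruct (Pb_bounds sg (-1/10) Hsg ltac:(lra)) as [_ Hm].
  assert (H0 : Pb sg 0 = 0) by (unfold Pb, cc; field).
  destruct (IVT (fun s => Pb sg s - p2) (-1/10) 0 Hf ltac:(lra) ltac:(simpl; lra) ltac:(simpl; lra))
    as [z [Hz Ez]].
  exists z. split; [assumption|]. simpl in Ez. lra.
Qed.

Lemma aubin_S : aubin S 0 (0, 0).
Proof.
  exists (1/20), (1/20), 4. split; [lra|split; [lra|split; [lra|]]].
  intros p1 p2 [x1 x2] Hp1 Hp2 HS Hx.
  rewrite Rminus_0_r in Hp1, Hp2. apply Rabs_def2 in Hp1, Hp2.
  destruct (abs_le_norm (sub2 (x1, x2) (0, 0))) as [A1 A2].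
  unfold sub2 in A1, A2, Hx; simpl in A1, A2, Hx. rewrite !Rminus_0_r in A1, A2, Hx.
  assert (B1 : Rabs x1 < 1/20) by lra. assert (B2 : Rabs x2 < 1/20) by lra.
  apply Rabs_def2 in B1. pose proof B2 as B2'. apply Rabs_def2 in B2'.
  destruct (classify p1 (x1, x2) HS ltac:(simpl; lra) ltac:(simpl; apply Rabs_def1; lra))
    as [Hx1 Hc]; simpl in Hx1, Hc.
  assert (Dist : forall y, Rabs (x1 - fst y) + Rabs (x2 - snd y) <= 4 * Rabs (p1 - p2) ->
                 norm2 (sub2 (x1, x2) y) <= 4 * Rabs (p1 - p2)).
  { intros y Hy. eapply Rle_trans; [apply norm_le_sum|]. unfold sub2; simpl. exact Hy. }
  destruct Hc as [[E2 Ep]|[[sg [Hsg [E2 Ep]]]|[E1 [E2 Ep]]]].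
  - subst x2 p1. destruct (Rle_lt_dec p2 0) as [H2|H2].
    + exists (p2, 0). split; [apply S_I; assumption|]. apply Dist; simpl.
      unfold Rabs; repeat destruct Rcase_abs; lra.
    + exists (0, 0). split; [apply S_O; lra|]. apply Dist; simpl.
      unfold Rabs; repeat destruct Rcase_abs; lra.
  - subst x2. assert (Ep2 : p1 = Pb sg x1) by (rewrite Ep; unfold Pb; ring). clear Ep. subst p1.
    destruct (Pb_bounds sg x1 Hsg ltac:(lra)) as [PB1 PB2].
    destruct (cc_bounds x1 ltac:(lra)) as [C1 C2].
    destruct (Rle_lt_dec 0 p2) as [H2|H2].
    + exists (0, 0). split; [apply S_O; lra|]. apply Dist; simpl.
      rewrite Rminus_0_r, Rminus_0_r, Rabs_mult.
      assert (Rabs sg = 1) by (destruct Hsg as [-> | ->]; unfold Rabs; destruct Rcase_abs; lra).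
      rewrite H, Rmult_1_l, (Rabs_right (cc x1)) by lra.
      unfold Rabs at 1 2; repeat destruct Rcase_abs; lra.
    + destruct (Pb_solve sg p2 Hsg ltac:(lra)) as [s2 [Hs2 Es2]].
      exists (s2, sg * cc s2). split.
      * rewrite <- Es2. apply S_sig; [assumption | lra].
      * apply Dist; simpl. rewrite <- Es2. apply Pb_lip; [assumption | lra | lra].
  - subst x1 x2. destruct (Rle_lt_dec 0 p2) as [H2|H2].
    + exists (0, 0). split; [apply S_O; lra|]. apply Dist; simpl.
      rewrite Rminus_0_r, Rabs_R0. pose proof (Rabs_pos (p1 - p2)). lra.
    + exists (p2, 0). split; [apply S_I; lra|]. apply Dist; simpl.
      unfold Rabs; repeat destruct Rcase_abs; lra.
Qed.

Theorem mainTheorem9 :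
  aubin S 0 (0, 0) /\
  (forall (q : R) (u : R2),
     graph_deriv S 0 (0, 0) q u <->
     exists xi : R2,
       (0, 0) = ( - q + fst u + ((1/2) * fst xi + (1/2) * snd xi),
                  0 - snd u + ((-1) * fst xi + 1 * snd xi) ) /\
       normal_cone_R2_minus ((1/2) * fst u - snd u, (1/2) * fst u + snd u) xi) /\
  (forall (q : R) (u : R2), q <= 0 ->
     (graph_deriv S 0 (0, 0) q u <->
      u = (q, 0) \/ u = ((4/3) * q, - (2/3) * q) \/ u = ((4/3) * q, (2/3) * q))) /\
  (forall (q : R) (u : R2), 0 <= q ->
     (graph_deriv S 0 (0, 0) q u <-> u = (0, 0))).
Proof.
  split; [apply aubin_S|]. split.
  { intros q u. split; intro Hg.
    - apply (proj2 (xi_iff q u)). apply (proj1 (gd_iff q u)). exact Hg.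
    - apply (proj2 (gd_iff q u)). apply (proj1 (xi_iff q u)). exact Hg. }
  split.
  - intros q u Hq. rewrite gd_iff. apply T_neg; assumption.
  - intros q u Hq. rewrite gd_iff. apply T_pos; assumption.
Qed.
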